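(* Let $\gamma_1$ be the type-1 greedy submodularity ratio of $f_{Pa}$ with respect to a run of Algorithm 2 (defined in the context). Then $$\gamma_1\ge\min_{j\in\{0,\dots,|\mathcal{Y}_2|\}}\frac{\lambda_2(F_p+H(\mathcal{Y}_2^j))\,\lambda_2(F_p+H(\{z_j\}\cup\mathcal{Y}_2^j))}{\lambda_1(F_p+H(\mathcal{Y}_2^j))\,\lambda_1(F_p+H(\{z_j\}\cup\mathcal{Y}_2^j))},$$ where, for each $j$, $z_j\in\arg\min_{y\in\bar{\mathcal{M}}\setminus\mathcal{Y}_2^j}\frac{\lambda_2(F_p+H(\{y\}\cup\mathcal{Y}_2^j))}{\lambda_1(F_p+H(\{y\}\cup\mathcal{Y}_2^j))}$.
   Context: For a symmetric positive semidefinite $2\times2$ matrix $P$, $\lambda_1(P)\ge\lambda_2(P)$ are its eigenvalues. Setting: networked SIR model on directed graph $\mathcal{G}=(\mathcal{V},\mathcal{E})$, $\mathcal{V}=[n]$, $\bar{\mathcal{N}}_i=\{j:(j,i)\in\mathcal{E}\}\cup\{i\}$, weights $a_{ij}\ge0$, sampling parameter $h$, dynamics $s_i[k+1]=s_i[k]-hs_i[k]\beta\sum_{j\in\bar{\mathcal{N}}_i}a_{ij}x_j[k]$, $x_i[k+1]=(1-h\delta)x_i[k]+hs_i[k]\beta\sum_{j\in\bar{\mathcal{N}}_i}a_{ij}x_j[k]$, $r_i[k+1]=r_i[k]+h\delta x_i[k]$, known initial condition, $\theta=[\beta\ \delta]^T$ with prior pdf $p(\theta)$; $x_i[k],r_i[k]\in[0,1)$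 viewed as functions of $\theta$. Given integers $1\le t_1\le t_2$, integers $N_i^x,N_i^r,\zeta_i,\eta_i\ge1$, costs $c_{k,i},b_{k,i}>0$, budget $B\ge0$. Ground set $\bar{\mathcal{M}}=\{(\hat x_i[k],l):i\in\mathcal{V},k\in\{t_1,\dots,t_2\},l\in[\zeta_i]\}\cup\{(\hat r_i[k],l):i\in\mathcal{V},k\in\{t_1,\dots,t_2\},l\in[\eta_i]\}$ with $c((\hat x_i[k],l))=c_{k,i}$, $c((\hat r_i[k],l))=b_{k,i}$, $c(\mathcal{Y})=\sum_{y\in\mathcal{Y}}c(y)$. $H_y=\mathbb{E}_\theta\big[\frac{N_i^x}{x_i[k](1-x_i[k])}\frac{\partial x_i[k]}{\partial\theta}(\frac{\partial x_i[k]}{\partial\theta})^T\big]$ for $y=(\hat x_i[k],l)$, analogously with $r$, $N_i^r$ for $y=(\hat r_i[k],l)$ (integrand $0$ where the state is $0$), $\mathbb{E}_\theta$ w.r.t. $p(\theta)$; $H_y\succeq0$; $H(\mathcal{Y})=\sum_{y\in\mathcal{Y}}H_y$. $F_p=\mathbb{E}_\theta[\nabla_\theta\ln p(\theta)\nabla_\theta\ln p(\theta)^T]\succ0$. $f_{Pa}(\mathcal{Y})=\mathrm{Tr}(F_p^{-1})-\mathrm{Tr}((F_p+H(\mathcal{Y}))^{-1})$. $\hat f_{Pa}$ is a set function approximating $f_{Pa}$ with $\hat f_{Pa}(\emptyset)=0$. Algorithm 2: (1) $\mathcal{Y}_1=\{y\}$ with $y\in\arg\max_{y\in\bar{\mathcal{M}}}\hat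 f_{Pa}(\{y\})$; (2) $\mathcal{Y}_2=\emptyset$, $\mathcal{C}=\bar{\mathcal{M}}$; (3) while $\mathcal{C}\ne\emptyset$: choose $y^\star\in\arg\max_{y\in\mathcal{C}}\frac{\hat f_{Pa}(\{y\}\cup\mathcal{Y}_2)-\hat f_{Pa}(\mathcal{Y}_2)}{c(y)}$; if $c(y^\star)+c(\mathcal{Y}_2)\le B$ add $y^\star$ to $\mathcal{Y}_2$; remove $y^\star$ from $\mathcal{C}$; (4) output the better of $\mathcal{Y}_1,\mathcal{Y}_2$ under $\hat f_{Pa}$. $\mathcal{Y}_2^j$ denotes the set of the first $j$ elements added to $\mathcal{Y}_2$ ($\mathcal{Y}_2^0=\emptyset$), $\mathcal{Y}_2$ the final set. The type-1 greedy submodularity ratio $\gamma_1$ is the largest real with $\sum_{y\in\mathcal{A}\setminus\mathcal{Y}_2^j}(f_{Pa}(\{y\}\cup\mathcal{Y}_2^j)-f_{Pa}(\mathcal{Y}_2^j))\ge\gamma_1(f_{Pa}(\mathcal{A}\cup\mathcal{Y}_2^j)-f_{Pa}(\mathcal{Y}_2^j))$ for all $\mathcal{A}\subseteq\bar{\mathcal{M}}$ and all $j\in\{0,\dots,|\mathcal{Y}_2|\}$. *)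

(* Defs.v *)
From HB Require Import structures.
From mathcomp Require Import all_boot all_order all_algebra.
From mathcomp Require Import reals.
Set Implicit Arguments. Unset Strict Implicit. Unset Printing Implicit Defensive.
Import Order.TTheory GRing.Theory Num.Theory.
Local Open Scope ring_scope.

Section Defs.
Variable R : realType.

Definition psd (P : 'M[R]_2) : Prop :=
  P^T = P /\ forall v : 'cV[R]_2, 0 <= (v^T *m P *m v) 0 0.
Definition pd (P : 'M[R]_2) : Prop :=
  P^T = P /\ forall v : 'cV[R]_2, v != 0 -> 0 < (v^T *m P *m v) 0 0.

(* eigenvalues lambda_1 >= lambda_2 of a symmetric 2x2 matrix
   (the two roots of its characteristic polynomial X^2 - tr X + det) *)
Definition lam1 (P : 'M[R]_2) : R :=
  (\tr P + Num.sqrt (\tr P ^+ 2 - 4 * \det P)) / 2.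
Definition lam2 (P : 'M[R]_2) : R :=
  (\tr P - Num.sqrt (\tr P ^+ 2 - 4 * \det P)) / 2.

Variable M : finType.

Definition HY (H : M -> 'M[R]_2) (Y : {set M}) : 'M[R]_2 := \sum_(y in Y) H y.

Definition fPa (Fp : 'M[R]_2) (H : M -> 'M[R]_2) (Y : {set M}) : R :=
  \tr (invmx Fp) - \tr (invmx (Fp + HY H Y)).

Definition csum (c : M -> R) (Y : {set M}) : R := \sum_(y in Y) c y.

(* update of Y_2 when y* is considered in step (3) *)
Definition step (c : M -> R) (B : R) (Y : {set M}) (y : M) : {set M} :=
  if c y + csum c Y <= B then y |: Y else Y.

(* s = sequence of the elements y* chosen (and removed from C) in step (3).
   greedy_valid C Y s : starting from candidate set C and current Y_2 = Y,
   s is a legal run of the while loop until C is empty. *)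
Fixpoint greedy_valid (fhat : {set M} -> R) (c : M -> R) (B : R)
    (C Y : {set M}) (s : seq M) : Prop :=
  match s with
  | [::] => C = set0
  | y :: s' =>
      [/\ y \in C,
          (forall y', y' \in C ->
             (fhat (y' |: Y) - fhat Y) / c y' <= (fhat (y |: Y) - fhat Y) / c y)
        & greedy_valid fhat c B (C :\ y) (step c B Y y) s']
  end.

Definition greedy_run fhat c B (s : seq M) : Prop :=
  greedy_valid fhat c B setT set0 s.

Fixpoint added (c : M -> R) (B : R) (Y : {set M}) (s : seq M) : seq M :=
  match s with
  | [::] => [::]
  | y :: s' => if c y + csum c Y <= B then y :: added c B (y |: Y) s'
               else added c B Y s'
  end.

Definition Y2seq c B (s : seq M) : seq M := added c B set0 s.

Definition Y2j c B (s : seq M) (j : nat) : {set M} :=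
  [set x in take j (Y2seq c B s)].

(* gamma satisfies the defining inequality of the type-1 greedy
   submodularity ratio of f w.r.t. the chain Y_2^0 ⊆ ... ⊆ Y_2^{|Y_2|} *)
Definition gsr1_ok (f : {set M} -> R) c B (s : seq M) (gamma : R) : Prop :=
  forall (A : {set M}) (j : nat), (j <= size (Y2seq c B s))%N ->
    gamma * (f (A :|: Y2j c B s j) - f (Y2j c B s j))
      <= \sum_(y in A :\: Y2j c B s j) (f (y |: Y2j c B s j) - f (Y2j c B s j)).

Definition is_gsr1 (f : {set M} -> R) c B s (gamma : R) : Prop :=
  gsr1_ok f c B s gamma /\ forall g, gsr1_ok f c B s g -> g <= gamma.

Definition eratio (Fp : 'M[R]_2) (H : M -> 'M[R]_2) (Y : {set M}) : R :=
  lam2 (Fp + HY H Y) / lam1 (Fp + HY H Y).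

End Defs.

(* Main.v *)
Require Import Defs.
From HB Require Import structures.
From mathcomp Require Import all_boot all_order all_algebra.
From mathcomp Require Import reals.
From mathcomp Require Import ring lra.
Import Order.TTheory GRing.Theory Num.Theory.
Local Open Scope ring_scope.

Set Implicit Arguments. Unset Strict Implicit.
Section Aux.
Variable R : realType.
Implicit Types X : 'M[R]_2.
Definition i0 : 'I_2 := @Ordinal 2 0 isT.
Definition i1 : 'I_2 := @Ordinal 2 1 isT.
Lemma li0 : lift i0 0 = i1. Proof. by apply: val_inj. Qed.
Lemma li1 : lift i1 0 = i0. Proof. by apply: val_inj. Qed.
Lemma sum2 (F : 'I_2 -> R) : \sum_i F i = F i0 + F i1.
Proof. by rewrite big_ord_recl big_ord1; congr (F _ + F _); apply: val_inj. Qed.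
Lemma tr2 (X : 'M[R]_2) : \tr X = X i0 i0 + X i1 i1.
Proof. by rewrite /mxtrace sum2. Qed.
Lemma det2 (X : 'M[R]_2) : \det X = X i0 i0 * X i1 i1 - X i0 i1 * X i1 i0.
Proof.
rewrite (expand_det_row _ i0) sum2 /cofactor !det_mx11 !mxE /=.
rewrite li0 li1 /= expr0 expr1; ring.
Qed.
Lemma trinv2 (X : 'M[R]_2) : \det X != 0 -> \tr (invmx X) = (X i0 i0 + X i1 i1) / \det X.
Proof.
move=> h; rewrite /invmx unitmxE unitfE h mxtraceZ tr2 !mxE /cofactor !det_mx11 !mxE.
by rewrite li0 li1 !exprD !expr0 !expr1 mulrNN !mul1r mulrC addrC.
Qed.

Definition vec2 (x y : R) : 'cV[R]_2 := \col_i (if i == i0 then x else y).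
Lemma vec2_0 x y : vec2 x y i0 0 = x. Proof. by rewrite mxE eqxx. Qed.
Lemma vec2_1 x y : vec2 x y i1 0 = y. Proof. by rewrite mxE. Qed.
Lemma vec2_ne0 x y : (x != 0) || (y != 0) -> vec2 x y != 0.
Proof.
case/orP=> h; apply: contra h => /eqP h.
  by rewrite -(vec2_0 x y) h mxE.
by rewrite -(vec2_1 x y) h mxE.
Qed.

Lemma quad (X : 'M[R]_2) (v : 'cV[R]_2) : (v^T *m X *m v) 0 0 =
  v i0 0 * v i0 0 * X i0 i0 + v i0 0 * v i1 0 * (X i0 i1 + X i1 i0)
  + v i1 0 * v i1 0 * X i1 i1.
Proof. rewrite !mxE !sum2 !mxE !sum2 !mxE; ring. Qed.

Lemma symE (X : 'M[R]_2) : X^T = X -> X i1 i0 = X i0 i1.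
Proof. by move=> h; have := congr1 (fun m : 'M[R]_2 => m i1 i0) h; rewrite mxE => <-. Qed.

Lemma psd_coord (X : 'M[R]_2) : psd X ->
  [/\ X i1 i0 = X i0 i1, 0 <= X i0 i0, 0 <= X i1 i1 &
      X i0 i1 ^+ 2 <= X i0 i0 * X i1 i1].
Proof.
case=> hs hq; have e := symE hs.
have q2 x y : 0 <= x * x * X i0 i0 + x * y * (X i0 i1 + X i0 i1) + y * y * X i1 i1.
  by have := hq (vec2 x y); rewrite quad vec2_0 vec2_1 e.
move: (q2 1 0) (q2 0 1) (q2 (X i1 i1) (- X i0 i1)) (q2 (X i0 i1) (- X i0 i0))
  (q2 1 1) (q2 1 (-1)).
rewrite e.
set a := X i0 i0; set b := X i0 i1; set d := X i1 i1.
move=> h1 h2 h3 h4 h5 h6.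
have ha : 0 <= a by nra.
have hd : 0 <= d by nra.
split => //.
have k4 : 0 <= a * (a * d - b ^+ 2) by move: h4; congr (_ <= _); ring.
have k3 : 0 <= d * (a * d - b ^+ 2) by move: h3; congr (_ <= _); ring.
case: (ltrgt0P a) => [ap|an|a0]; first by rewrite -subr_ge0 -(pmulr_rge0 _ ap).
  by move: ha; rewrite leNgt an.
case: (ltrgt0P d) => [dp|dn|d0]; first by rewrite -subr_ge0 -(pmulr_rge0 _ dp).
  by move: hd; rewrite leNgt dn.
rewrite a0 d0 in h5 h6 *; nra.
Qed.

Lemma pd_coord (X : 'M[R]_2) : pd X ->
  [/\ X i1 i0 = X i0 i1, 0 < X i0 i0 & 0 < X i0 i0 * X i1 i1 - X i0 i1 ^+ 2].
Proof.
case=> hs hq; have e := symE hs.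
have q2 x y : (x != 0) || (y != 0) ->
    0 < x * x * X i0 i0 + x * y * (X i0 i1 + X i0 i1) + y * y * X i1 i1.
  by move=> h; have := hq (vec2 x y) (vec2_ne0 h); rewrite quad vec2_0 vec2_1 e.
have ha : 0 < X i0 i0 by have := q2 1 0; rewrite oner_neq0 /=; nra.
have := q2 (X i0 i1) (- X i0 i0); rewrite oppr_eq0 (gt_eqF ha) orbT => /(_ isT).
rewrite e; set a := X i0 i0; set b := X i0 i1; set d := X i1 i1 => h.
split => //.
have k : 0 < a * (a * d - b ^+ 2) by move: h; congr (_ < _); ring.
by rewrite -(pmulr_rgt0 _ ha).
Qed.

Lemma psd_add (X Y : 'M[R]_2) : psd X -> psd Y -> psd (X + Y).
Proof.
case=> hX qX [hY qY]; split; first by rewrite linearD /= hX hY.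
by move=> v; rewrite mulmxDr mulmxDl mxE addr_ge0.
Qed.
Lemma psd0 : psd (0 : 'M[R]_2).
Proof. by split; [rewrite trmx0 | move=> v; rewrite mulmx0 mul0mx mxE]. Qed.
Lemma pd_add (X Y : 'M[R]_2) : pd X -> psd Y -> pd (X + Y).
Proof.
case=> hX qX [hY qY]; split; first by rewrite linearD /= hX hY.
by move=> v hv; rewrite mulmxDr mulmxDl mxE; move: (qX v hv) (qY v); lra.
Qed.

Lemma sq_le (x y : R) : 0 <= y -> x ^+ 2 <= y ^+ 2 -> x <= y.
Proof. move=> hy h; nra. Qed.

Lemma sqrtE (x : R) : 0 <= x -> Num.sqrt x ^+ 2 = x.
Proof. exact: sqr_sqrtr. Qed.

Lemma tri (u1 v1 u2 v2 : R) :
  Num.sqrt ((u1 + u2) ^+ 2 + (v1 + v2) ^+ 2) <=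
  Num.sqrt (u1 ^+ 2 + v1 ^+ 2) + Num.sqrt (u2 ^+ 2 + v2 ^+ 2).
Proof.
have p x y : 0 <= x ^+ 2 + y ^+ 2 :> R by rewrite addr_ge0 // sqr_ge0.
set A := Num.sqrt _; set B := Num.sqrt (u1 ^+ 2 + _); set C := Num.sqrt (u2 ^+ 2 + _).
have hA : A ^+ 2 = _ := sqrtE (p _ _).
have hB : B ^+ 2 = _ := sqrtE (p _ _).
have hC : C ^+ 2 = _ := sqrtE (p _ _).
have gB : 0 <= B := sqrtr_ge0 _.
have gC : 0 <= C := sqrtr_ge0 _.
have hBC : u1 * u2 + v1 * v2 <= B * C.
  apply: sq_le; first exact: mulr_ge0.
  rewrite exprMn hB hC.
  rewrite -subr_ge0.
  have -> : (u1 ^+ 2 + v1 ^+ 2) * (u2 ^+ 2 + v2 ^+ 2) - (u1 * u2 + v1 * v2) ^+ 2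
     = (u1 * v2 - u2 * v1) ^+ 2 by ring.
  exact: sqr_ge0.
apply: sq_le; first exact: addr_ge0.
rewrite hA [(B + C) ^+ 2]sqrrD hB hC; nra.
Qed.

Definition sq (X : 'M[R]_2) := Num.sqrt (\tr X ^+ 2 - 4 * \det X).

Lemma disc_eq (X : 'M[R]_2) : X i1 i0 = X i0 i1 ->
  \tr X ^+ 2 - 4 * \det X = (X i0 i0 - X i1 i1) ^+ 2 + (2 * X i0 i1) ^+ 2.
Proof. by move=> e; rewrite tr2 det2 e; ring. Qed.

Lemma sq_ge0 X : 0 <= sq X. Proof. exact: sqrtr_ge0. Qed.

Lemma lam_sum X : lam1 X + lam2 X = \tr X.
Proof. rewrite /lam1 /lam2; field; rewrite ?pnatr_eq0 //. Qed.

Lemma lam_le X : lam2 X <= lam1 X.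
Proof. rewrite /lam1 /lam2; have := sq_ge0 X; rewrite /sq; lra. Qed.

Lemma lam_prod X : X i1 i0 = X i0 i1 -> lam1 X * lam2 X = \det X.
Proof.
move=> e; have h : sq X ^+ 2 = \tr X ^+ 2 - 4 * \det X.
  by rewrite /sq sqrtE // disc_eq // addr_ge0 // sqr_ge0.
rewrite /lam1 /lam2 -/(sq X).
have -> : \det X = (\tr X ^+ 2 - sq X ^+ 2) / 4.
  by rewrite h; field; rewrite ?pnatr_eq0.
by field; rewrite ?pnatr_eq0.
Qed.

Lemma lam2_pos X : pd X -> 0 < lam2 X.
Proof.
move=> hX; have [e ha hdet] := pd_coord hX.
have h : sq X ^+ 2 = \tr X ^+ 2 - 4 * \det X.
  by rewrite /sq sqrtE // disc_eq // addr_ge0 // sqr_ge0.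
have hd : 0 < \det X by rewrite det2 e -expr2.
have ht : 0 < \tr X by rewrite tr2; nra.
have := sq_ge0 X; rewrite /lam2 -/(sq X) => g.
have : sq X < \tr X by nra.
lra.
Qed.

Lemma lam1_pos X : pd X -> 0 < lam1 X.
Proof. move=> h; exact: lt_le_trans (lam2_pos h) (lam_le X). Qed.

Lemma trinv_lam X : pd X -> \tr (invmx X) = (lam1 X)^-1 + (lam2 X)^-1.
Proof.
move=> hX; have [e ha hdet] := pd_coord hX.
have hd : 0 < \det X by rewrite det2 e -expr2.
rewrite trinv2 ?gt_eqF // -tr2 -lam_sum -lam_prod //.
have := lam2_pos hX; have := lam1_pos hX => p1 p2.
field; rewrite ?gt_eqF //.
Qed.

Lemma lam_mono X (Q : 'M[R]_2) : X i1 i0 = X i0 i1 -> psd Q ->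
  lam1 X <= lam1 (X + Q) /\ lam2 X <= lam2 (X + Q).
Proof.
move=> e hQ; have [eq pq rq qq] := psd_coord hQ.
have eS : (X + Q) i1 i0 = (X + Q) i0 i1 by rewrite !mxE e eq.
rewrite /lam1 /lam2 (disc_eq e) (disc_eq eS) mxtraceD !tr2 !mxE.
set a := X i0 i0; set b := X i0 i1; set d := X i1 i1.
set p := Q i0 i0; set q := Q i0 i1; set r := Q i1 i1.
have -> : a + p - (d + r) = (a - d) + (p - r) by ring.
have -> : 2 * (b + q) = 2 * b + 2 * q by ring.
have T := tri (a - d) (2 * b) (p - r) (2 * q).
have T' := tri ((a - d) + (p - r)) (2 * b + 2 * q) (- (p - r)) (- (2 * q)).
rewrite !addrK !sqrrN in T'.
have sQ : Num.sqrt ((p - r) ^+ 2 + (2 * q) ^+ 2) <= p + r.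
  apply: sq_le; first exact: addr_ge0.
  rewrite sqrtE; last by rewrite addr_ge0 // sqr_ge0.
  rewrite -subr_ge0.
  have -> : (p + r) ^+ 2 - ((p - r) ^+ 2 + (2 * q) ^+ 2) = 4 * (p * r - q ^+ 2) by ring.
  by apply: mulr_ge0; [|rewrite subr_ge0].
split; lra.
Qed.

Lemma gain_bounds (P Q : 'M[R]_2) : pd P -> psd Q ->
  \tr Q / (lam1 P * lam1 (P + Q)) <= \tr (invmx P) - \tr (invmx (P + Q)) /\
  \tr (invmx P) - \tr (invmx (P + Q)) <= \tr Q / (lam2 P * lam2 (P + Q)).
Proof.
move=> hP hQ; have hS := pd_add hP hQ.
have [e _ _] := pd_coord hP.
have [m1 m2] := lam_mono e hQ.
rewrite !trinv_lam //.
have eQ : \tr Q = lam1 (P + Q) + lam2 (P + Q) - lam1 P - lam2 P.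
  by have := lam_sum P; have := lam_sum (P + Q); rewrite mxtraceD; lra.
rewrite eQ.
have a2 := lam2_pos hP; have b2 := lam2_pos hS.
have a12 := lam_le P; have b12 := lam_le (P + Q).
move: m1 m2 a2 b2 a12 b12.
set a := lam1 P; set a' := lam2 P; set b := lam1 (P + Q); set b' := lam2 (P + Q).
move=> m1 m2 a2 b2 a12 b12.
have a1 : 0 < a by lra.
have b1 : 0 < b by lra.
have k : a' * b' <= a * b by nra.
have ab : 0 < a * b by apply: mulr_gt0.
have ab' : 0 < a' * b' by apply: mulr_gt0.
have k' : (a * b)^-1 <= (a' * b')^-1 by rewrite lef_pV2 ?posrE ?ab ?ab'.
split.
  rewrite -subr_ge0.
  have -> : a^-1 + a'^-1 - (b^-1 + b'^-1) - (b + b' - a - a') / (a * b)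
      = (b' - a') * ((a' * b')^-1 - (a * b)^-1).
    by field; rewrite ?gt_eqF.
  by apply: mulr_ge0; lra.
rewrite -subr_ge0.
have -> : (b + b' - a - a') / (a' * b') - (a^-1 + a'^-1 - (b^-1 + b'^-1))
    = (b - a) * ((a' * b')^-1 - (a * b)^-1).
  by field; rewrite ?gt_eqF.
by apply: mulr_ge0; lra.
Qed.
End Aux.

Section Main.
Variable R : realType.
Variable M : finType.
Implicit Types (H : M -> 'M[R]_2) (Y A : {set M}).

Lemma psd_HY H Y : (forall y, psd (H y)) -> psd (HY H Y).
Proof. move=> hH; apply: big_ind => //; [exact: psd0 | exact: psd_add]. Qed.

Lemma HY_U1 H Y y : y \notin Y -> HY H (y |: Y) = H y + HY H Y.
Proof. by move=> hy; rewrite /HY big_setU1. Qed.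

Lemma HY_split H Y A : HY H (A :|: Y) = HY H Y + HY H (A :\: Y).
Proof.
rewrite /HY (big_setID Y) /=; congr (_ + _); apply: eq_bigl => x.
  by rewrite setUC setUK.
by rewrite setDUl setDv setU0.
Qed.

Lemma tr_HY H Y : \tr (HY H Y) = \sum_(y in Y) \tr (H y).
Proof. by rewrite /HY (big_morph _ (@mxtraceD _ _) (mxtrace0 _ _)). Qed.

Lemma tr_psd (Q : 'M[R]_2) : psd Q -> 0 <= \tr Q.
Proof. by case/psd_coord => _ a b _; rewrite tr2 addr_ge0. Qed.

Lemma real_step (g t a a' b b' bA : R) : 0 <= g -> 0 <= t -> 0 < a -> 0 < a' ->
  0 < b -> 0 < b' -> b' <= bA -> g <= a' * b' / (a * b) ->
  g * (t / (a' * bA)) <= t / (a * b).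
Proof.
move=> g0 t0 a0 a'0 b0 b'0 hb hg.
have bA0 : 0 < bA by apply: lt_le_trans hb.
apply: le_trans (_ : g * (t / (a' * b')) <= _).
  apply: ler_wpM2l => //; apply: ler_wpM2l => //.
  by rewrite lef_pV2 ?posrE ?mulr_gt0 //; apply: ler_wpM2l => //; apply: ltW.
apply: le_trans (_ : a' * b' / (a * b) * (t / (a' * b')) <= _).
  by apply: ler_wpM2r => //; apply: divr_ge0 => //; apply: ltW; apply: mulr_gt0.
rewrite le_eqVlt; apply/orP; left; apply/eqP.
by field; rewrite ?gt_eqF.
Qed.

Lemma core Fp H Y A (z : M) (g : R) :
  pd Fp -> (forall y, psd (H y)) -> 0 <= g ->
  (forall y, y \notin Y -> eratio Fp H (z |: Y) <= eratio Fp H (y |: Y)) ->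
  g <= lam2 (Fp + HY H Y) * lam2 (Fp + HY H (z |: Y))
       / (lam1 (Fp + HY H Y) * lam1 (Fp + HY H (z |: Y))) ->
  g * (fPa Fp H (A :|: Y) - fPa Fp H Y)
    <= \sum_(y in A :\: Y) (fPa Fp H (y |: Y) - fPa Fp H Y).
Proof.
move=> hF hH g0 hz hg.
set P := Fp + HY H Y.
have hP : pd P by apply: pd_add => //; exact: psd_HY.
have fe Q : fPa Fp H Q - fPa Fp H Y = \tr (invmx P) - \tr (invmx (Fp + HY H Q)).
  by rewrite /fPa; lra.
have ey y : y \notin Y -> Fp + HY H (y |: Y) = P + H y.
  by move=> hy; rewrite HY_U1 // /P -addrA (addrC (H y)).
rewrite fe HY_split addrA -/P.
set D := A :\: Y.
have [_ L2] := gain_bounds hP (psd_HY D hH).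
apply: le_trans (ler_wpM2l g0 L2) _.
rewrite tr_HY mulr_suml mulr_sumr; apply: ler_sum => y hy.
have yY : y \notin Y by move: hy; rewrite inE => /andP[].
rewrite fe (ey y yY).
have [L1 _] := gain_bounds hP (hH y).
apply: le_trans _ L1.
have hPy : pd (P + H y) by apply: pd_add.
have eD : P + HY H D = P + H y + HY H (D :\ y) by rewrite /HY (big_setD1 _ hy) addrA.
have [_ mono] := lam_mono (let: And3 e _ _ := pd_coord hPy in e) (psd_HY (D :\ y) hH).
rewrite -eD in mono.
apply: (@real_step g _ _ _ _ (lam2 (P + H y))) => //.
- exact: tr_psd.
- exact: lam1_pos.
- exact: lam2_pos.
- exact: lam1_pos.
- exact: lam2_pos.
apply: le_trans hg _.
have := hz y yY; rewrite /eratio (ey y yY).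
move=> h.
have E1 (a b c d : R) : a * b / (c * d) = (a / c) * (b / d) by rewrite mulf_div.
rewrite (E1 (lam2 P)) (E1 (lam2 P)); apply: ler_wpM2l => //.
apply: divr_ge0; [apply: ltW; exact: lam2_pos | apply: ltW; exact: lam1_pos].
Qed.

End Main.

Unset Implicit Arguments.
Lemma bigmin_le (R : realType) n (P : pred 'I_n) (F : 'I_n -> R) j0 :
  P j0 -> \big[Num.min/1]_(j < n | P j) F j <= F j0.
Proof. by move=> h; rewrite (bigD1 j0) //= ge_min lexx. Qed.

Lemma bigmin_ge0 (R : realType) n (P : pred 'I_n) (F : 'I_n -> R) :
  (forall j, 0 <= F j) -> 0 <= \big[Num.min/1]_(j < n | P j) F j.
Proof. by move=> h; apply: (big_ind (fun x => 0 <= x)) => // x y hx hy; rewrite le_min hx hy. Qed.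

Theorem lemma4 (R : realType) (M : finType) (c : M -> R) (B : R)
    (fhat : {set M} -> R) (H : M -> 'M[R]_2) (Fp : 'M[R]_2)
    (s : seq M) (z : nat -> M) (gamma1 : R) :
  (forall y, 0 < c y) -> 0 <= B -> fhat set0 = 0 ->
  (forall y, psd (H y)) -> pd Fp ->
  greedy_run fhat c B s ->
  is_gsr1 (fPa Fp H) c B s gamma1 ->
  (forall j, (j <= size (Y2seq c B s))%N -> Y2j c B s j != setT ->
     z j \notin Y2j c B s j /\
     (forall y, y \notin Y2j c B s j ->
        eratio Fp H (z j |: Y2j c B s j) <= eratio Fp H (y |: Y2j c B s j))) ->
  \big[Num.min/1]_(j < (size (Y2seq c B s)).+1 | Y2j c B s j != setT)
     (lam2 (Fp + HY H (Y2j c B s j)) * lam2 (Fp + HY H (z j |: Y2j c B s j))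
      / (lam1 (Fp + HY H (Y2j c B s j)) * lam1 (Fp + HY H (z j |: Y2j c B s j))))
  <= gamma1.
Proof.
move=> _ _ _ hH hF _ [_ hmax] hz.
set g := \big[Num.min/1]_(j < _ | _) _.
apply: hmax; move=> A j hj.
have pdY Y : pd (Fp + HY H Y) by apply: pd_add => //; exact: psd_HY.
have g0 : 0 <= g.
  apply: bigmin_ge0 => i; apply: divr_ge0; apply: mulr_ge0; apply: ltW;
    by [apply: lam2_pos | apply: lam1_pos].
case: (eqVneq (Y2j c B s j) setT) => hY.
  by rewrite hY setUT setDT big_set0 subrr mulr0.
have [_ hzj] := hz j hj hY.
apply: (@core R M Fp H _ A (z j) g) => //.
have hj' : (j < (size (Y2seq c B s)).+1)%N by rewrite ltnS.
exact: (@bigmin_le R _ (fun i : 'I_(size (Y2seq c B s)).+1 => Y2j c B s i != setT)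
  (fun i : 'I_(size (Y2seq c B s)).+1 =>
     lam2 (Fp + HY H (Y2j c B s i)) * lam2 (Fp + HY H (z i |: Y2j c B s i))
      / (lam1 (Fp + HY H (Y2j c B s i)) * lam1 (Fp + HY H (z i |: Y2j c B s i))))
  (Ordinal hj') hY).
Qed.
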